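(* Let $\mathcal{C}$ be a deflation-exact category and let $\mathcal{A}$ be an admissibly deflation-percolating subcategory of $\mathcal{C}$. Let $f,g$ be composable morphisms of $\mathcal{C}$. If two of the three morphisms $f$, $g$, $gf$ belong to $S_{\mathcal{A}}$, then so does the third.
   Context: A conflation category is an additive category together with a class of kernel-cokernel pairs $A\xrightarrow{f}B\xrightarrow{g}C$ ($f=\ker g$, $g=\operatorname{coker} f$), closed under isomorphisms, called conflations; the first morphism is an inflation, the second a deflation. A deflation-exact category is a conflation category satisfying: (R0) $1_0$ is a deflation; (R1) composites of deflations are deflations; (R2) the pullback of a deflation along any morphism exists and is a deflation. A non-empty full subcategory $\mathcal{A}$ is admissibly deflation-percolating if: (A1) for every conflation $A'\rightarrowtail A\twoheadrightarrow A''$, $A\in\mathcal{A}$ iff $A',A''\in\mathcal{A}$; (A2) every morphism $C\to A$ with $A\in\mathcal{A}$ factors as a deflation $C\twoheadrightarrow A'$ followed by an inflation $A'\rightarrowtail A$ with $A'\in\mathcal{A}$; (A3) if $a\colon C\rightarrowtail D$ is an inflation and $b\colon C\twoheadrightarrow A$ a deflation with $A\in\mathcal{A}$, the pushout of $a$ along $b$ exists and yields a deflation $D\twoheadrightarrow P$ and an inflation $A\rightarrowtail P$. An $\mathcal{A}^{-1}$-inflation is an inflation with cokernel in $\mathcal{A}$; an $\mathcal{A}^{-1}$-deflation is a deflation with kernel in $\mathcal{A}$. $S_{\mathcal{A}}$ (the weak isomorphisms) is the set of all finite composites of $\mathcal{A}^{-1}$-inflations and $\mathcal{A}^{-1}$-deflations.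 *)

(* Defs.v *)
From HB Require Import structures.
From mathcomp Require Import all_boot all_algebra.
Set Implicit Arguments. Unset Strict Implicit. Unset Printing Implicit Defensive.
Import GRing.Theory.
Local Open Scope ring_scope.

Record AddCat := {
  obj : Type;
  hom : obj -> obj -> zmodType;
  idm : forall X, hom X X;
  cmp : forall X Y Z, hom Y Z -> hom X Y -> hom X Z;
  compA : forall X Y Z W (h : hom Z W) (g : hom Y Z) (f : hom X Y),
      cmp h (cmp g f) = cmp (cmp h g) f;
  comp1m : forall X Y (f : hom X Y), cmp (idm Y) f = f;
  compm1 : forall X Y (f : hom X Y), cmp f (idm X) = f;
  compDl : forall X Y Z (g g' : hom Y Z) (f : hom X Y),
      cmp (g + g') f = cmp g f + cmp g' f;
  compDr : forall X Y Z (g : hom Y Z) (f f' : hom X Y),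
      cmp g (f + f') = cmp g f + cmp g f';
  zobj : obj;
  zobj_init : forall X (u v : hom zobj X), u = v;
  zobj_term : forall X (u v : hom X zobj), u = v;
  bp : obj -> obj -> obj;
  bp_i1 : forall A B, hom A (bp A B);
  bp_i2 : forall A B, hom B (bp A B);
  bp_p1 : forall A B, hom (bp A B) A;
  bp_p2 : forall A B, hom (bp A B) B;
  bp_p1i1 : forall A B, cmp (bp_p1 A B) (bp_i1 A B) = idm A;
  bp_p2i2 : forall A B, cmp (bp_p2 A B) (bp_i2 A B) = idm B;
  bp_sum : forall A B, cmp (bp_i1 A B) (bp_p1 A B) + cmp (bp_i2 A B) (bp_p2 A B)
                       = idm (bp A B)
}.

Arguments idm {a} X.
Arguments cmp {a X Y Z}.
Arguments zobj {a}.
Arguments hom a : clear implicits.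

Section Conflations.
Variable C : AddCat.

Definition is_iso (X Y : obj C) (f : hom C X Y) : Prop :=
  exists g : hom C Y X, cmp g f = idm X /\ cmp f g = idm Y.

Definition is_kernel (A B D : obj C) (f : hom C A B) (g : hom C B D) : Prop :=
  cmp g f = 0 /\
  forall X (h : hom C X B), cmp g h = 0 -> exists! u : hom C X A, cmp f u = h.

Definition is_cokernel (A B D : obj C) (f : hom C A B) (g : hom C B D) : Prop :=
  cmp g f = 0 /\
  forall X (h : hom C B X), cmp h f = 0 -> exists! u : hom C D X, cmp u g = h.

Definition confl_class := forall X Y Z : obj C, hom C X Y -> hom C Y Z -> Prop.

Definition conflation_category (confl : confl_class) : Prop :=
  (forall A B D (f : hom C A B) (g : hom C B D),
      confl _ _ _ f g -> is_kernel f g /\ is_cokernel f g) /\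
  (forall A B D A' B' D' (f : hom C A B) (g : hom C B D)
          (f' : hom C A' B') (g' : hom C B' D')
          (a : hom C A A') (b : hom C B B') (c : hom C D D'),
      confl _ _ _ f g -> is_iso a -> is_iso b -> is_iso c ->
      cmp f' a = cmp b f -> cmp g' b = cmp c g ->
      confl _ _ _ f' g').

Variable confl : confl_class.

Definition inflation (A B : obj C) (f : hom C A B) : Prop :=
  exists (D : obj C) (g : hom C B D), confl f g.

Definition deflation (B D : obj C) (g : hom C B D) : Prop :=
  exists (A : obj C) (f : hom C A B), confl f g.

Definition is_pullback (B D E P : obj C) (p : hom C B E) (h : hom C D E)
    (p' : hom C P D) (h' : hom C P B) : Prop :=
  cmp p h' = cmp h p' /\
  forall Q (x : hom C Q D) (y : hom C Q B), cmp h x = cmp p y ->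
    exists! u : hom C Q P, cmp p' u = x /\ cmp h' u = y.

Definition is_pushout (E D A P : obj C) (a : hom C E D) (b : hom C E A)
    (b' : hom C D P) (a' : hom C A P) : Prop :=
  cmp b' a = cmp a' b /\
  forall Q (x : hom C D Q) (y : hom C A Q), cmp x a = cmp y b ->
    exists! u : hom C P Q, cmp u b' = x /\ cmp u a' = y.

Definition deflation_exact : Prop :=
  conflation_category confl /\
  (* R0 *) deflation (idm (@zobj C)) /\
  (* R1 *) (forall X Y Z (f : hom C X Y) (g : hom C Y Z),
              deflation f -> deflation g -> deflation (cmp g f)) /\
  (* R2 *) (forall B D E (p : hom C B E) (h : hom C D E), deflation p ->
              exists (P : obj C) (p' : hom C P D) (h' : hom C P B),
                is_pullback p h p' h' /\ deflation p').

Variable Aset : obj C -> Prop.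

Definition adm_deflation_percolating : Prop :=
  (exists X, Aset X) /\
  (* A1 *) (forall A' A A'' (f : hom C A' A) (g : hom C A A''), confl f g ->
              (Aset A <-> Aset A' /\ Aset A'')) /\
  (* A2 *) (forall X A (h : hom C X A), Aset A ->
              exists (A' : obj C) (d : hom C X A') (i : hom C A' A),
                Aset A' /\ deflation d /\ inflation i /\ h = cmp i d) /\
  (* A3 *) (forall E D A (a : hom C E D) (b : hom C E A),
              inflation a -> deflation b -> Aset A ->
              exists (P : obj C) (b' : hom C D P) (a' : hom C A P),
                is_pushout a b b' a' /\ deflation b' /\ inflation a').

Definition A_inflation (X Y : obj C) (f : hom C X Y) : Prop :=
  exists (Z : obj C) (g : hom C Y Z), confl f g /\ Aset Z.

Definition A_deflation (Y Z : obj C) (g : hom C Y Z) : Prop :=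
  exists (X : obj C) (f : hom C X Y), confl f g /\ Aset X.

Inductive S_A : forall X Y : obj C, hom C X Y -> Prop :=
  | S_A_infl X Y (f : hom C X Y) : A_inflation f -> S_A f
  | S_A_defl X Y (f : hom C X Y) : A_deflation f -> S_A f
  | S_A_comp X Y Z (f : hom C X Y) (g : hom C Y Z) : S_A f -> S_A g -> S_A (cmp g f).

End Conflations.

(* Main.v *)
Require Import Defs.
From mathcomp Require Import ssreflect ssrfun ssrbool eqtype ssralg.
Set Implicit Arguments. Unset Strict Implicit. Unset Printing Implicit Defensive.
Import GRing.Theory.
Local Open Scope ring_scope.
Local Notation compA := Defs.compA.
Local Notation comp1m := Defs.comp1m.
Local Notation compm1 := Defs.compm1.
Local Notation compDl := Defs.compDl.
Local Notation compDr := Defs.compDr.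

Section Basics.
Variable C : AddCat.
Local Notation "g ° f" := (cmp g f) (at level 40, left associativity).
Local Notation i1 := (@bp_i1 C _ _).
Local Notation i2 := (@bp_i2 C _ _).
Local Notation p1 := (@bp_p1 C _ _).
Local Notation p2 := (@bp_p2 C _ _).

Lemma comp0m (X Y Z : obj C) (f : hom C X Y) : (0 : hom C Y Z) ° f = 0.
Proof. by apply: (addrI (0 ° f)); rewrite -compDl !addr0. Qed.

Lemma compm0 (X Y Z : obj C) (g : hom C Y Z) : g ° (0 : hom C X Y) = 0.
Proof. by apply: (addrI (g ° 0)); rewrite -compDr !addr0. Qed.

Lemma compNl (X Y Z : obj C) (g : hom C Y Z) (f : hom C X Y) : (- g) ° f = - (g ° f).
Proof. by apply: (addrI (g ° f)); rewrite -compDl !subrr comp0m. Qed.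

Lemma compNr (X Y Z : obj C) (g : hom C Y Z) (f : hom C X Y) : g ° (- f) = - (g ° f).
Proof. by apply: (addrI (g ° f)); rewrite -compDr !subrr compm0. Qed.

Lemma compBl (X Y Z : obj C) (g g' : hom C Y Z) (f : hom C X Y) : (g - g') ° f = g ° f - g' ° f.
Proof. by rewrite compDl compNl. Qed.

Lemma compBr (X Y Z : obj C) (g : hom C Y Z) (f f' : hom C X Y) : g ° (f - f') = g ° f - g ° f'.
Proof. by rewrite compDr compNr. Qed.

Lemma zinit (X : obj C) (u : hom C zobj X) : u = 0.
Proof. exact: zobj_init. Qed.

Lemma zterm (X : obj C) (u : hom C X zobj) : u = 0.
Proof. exact: zobj_term. Qed.

Lemma eqr (X Y Z W : obj C) (a : hom C Y Z) (b : hom C X Y) (c : hom C X Z) (f : hom C W X) :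
  a ° b = c -> a ° (b ° f) = c ° f.
Proof. by move=> <-; rewrite compA. Qed.

Lemma p1i2 (A B : obj C) : (bp_p1 A B) ° (bp_i2 A B) = 0.
Proof.
have H := bp_sum A B.
have E : p1 ° i2 = p1 ° ((i1 ° p1 + i2 ° p2) ° i2) :> hom C B A by rewrite H comp1m.
rewrite compDl -!compA compDr bp_p2i2 compm1 (eqr _ (bp_p1i1 A B)) comp1m in E.
by apply/esym/(addrI (p1 ° i2)); rewrite addr0 -E.
Qed.

Lemma p2i1 (A B : obj C) : (bp_p2 A B) ° (bp_i1 A B) = 0.
Proof.
have H := bp_sum A B.
have E : p2 ° i1 = p2 ° ((i1 ° p1 + i2 ° p2) ° i1) :> hom C A B by rewrite H comp1m.
rewrite compDl -!compA compDr bp_p1i1 compm1 (eqr _ (bp_p2i2 A B)) comp1m in E.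
by apply/esym/(addrI (p2 ° i1)); rewrite addr0 -E.
Qed.

Lemma bp_ext (A B T : obj C) (u v : hom C T (bp A B)) :
  p1 ° u = p1 ° v -> p2 ° u = p2 ° v -> u = v.
Proof.
move=> h1 h2.
by rewrite -(comp1m u) -(comp1m v) -bp_sum !compDl -!compA h1 h2.
Qed.

Lemma bp_ext_out (A B T : obj C) (u v : hom C (bp A B) T) :
  u ° i1 = v ° i1 -> u ° i2 = v ° i2 -> u = v.
Proof.
move=> h1 h2.
by rewrite -(compm1 u) -(compm1 v) -bp_sum !compDr !compA h1 h2.
Qed.

Lemma p1i1r (A B T : obj C) (f : hom C T A) : (bp_p1 A B) ° ((bp_i1 A B) ° f) = f.
Proof. by rewrite compA bp_p1i1 comp1m. Qed.
Lemma p2i2r (A B T : obj C) (f : hom C T B) : (bp_p2 A B) ° ((bp_i2 A B) ° f) = f.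
Proof. by rewrite compA bp_p2i2 comp1m. Qed.
Lemma p1i2r (A B T : obj C) (f : hom C T B) : (bp_p1 A B) ° ((bp_i2 A B) ° f) = 0.
Proof. by rewrite compA p1i2 comp0m. Qed.
Lemma p2i1r (A B T : obj C) (f : hom C T A) : (bp_p2 A B) ° ((bp_i1 A B) ° f) = 0.
Proof. by rewrite compA p2i1 comp0m. Qed.

End Basics.

Ltac cnorm1 := rewrite ?compDl ?compDr ?compNl ?compNr -?compA ?comp0m ?compm0 ?comp1m ?compm1
  ?p1i1r ?p2i2r ?p1i2r ?p2i1r ?bp_p1i1 ?bp_p2i2 ?p1i2 ?p2i1 ?addr0 ?add0r ?oppr0 ?subr0 ?sub0r.
Ltac cnorm := cnorm1; cnorm1; cnorm1.

Section Confl.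
Variable C : AddCat.
Variable confl : confl_class C.
Hypothesis HC : deflation_exact confl.
Local Notation "g ° f" := (cmp g f) (at level 40, left associativity).
Local Notation i1 := (@bp_i1 C _ _).
Local Notation i2 := (@bp_i2 C _ _).
Local Notation p1 := (@bp_p1 C _ _).
Local Notation p2 := (@bp_p2 C _ _).

Definition mono (X Y : obj C) (f : hom C X Y) :=
  forall T (u v : hom C T X), f ° u = f ° v -> u = v.
Definition epi (X Y : obj C) (f : hom C X Y) :=
  forall T (u v : hom C Y T), u ° f = v ° f -> u = v.

Lemma confl_kc (A B D : obj C) (f : hom C A B) (g : hom C B D) :
  confl f g -> is_kernel f g /\ is_cokernel f g.
Proof. by case: HC => [[H _] _]; apply: H. Qed.

Lemma confl_iso (A B D A' B' D' : obj C) (f : hom C A B) (g : hom C B D)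
          (f' : hom C A' B') (g' : hom C B' D')
          (a : hom C A A') (b : hom C B B') (c : hom C D D') :
      confl f g -> is_iso a -> is_iso b -> is_iso c ->
      f' ° a = b ° f -> g' ° b = c ° g -> confl f' g'.
Proof. by case: HC => [[_ H] _]; apply: H. Qed.

Lemma confl_comp0 (A B D : obj C) (f : hom C A B) (g : hom C B D) :
  confl f g -> g ° f = 0.
Proof. by case/confl_kc => [[]]. Qed.

Lemma confl_lift (A B D T : obj C) (f : hom C A B) (g : hom C B D) (h : hom C T B) :
  confl f g -> g ° h = 0 -> exists u, f ° u = h.
Proof. by case/confl_kc => [[_ H] _] /H [u [Hu _]]; exists u. Qed.

Lemma confl_desc (A B D T : obj C) (f : hom C A B) (g : hom C B D) (h : hom C B T) :
  confl f g -> h ° f = 0 -> exists u, u ° g = h.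
Proof. by case/confl_kc => [_ [_ H]] /H [u [Hu _]]; exists u. Qed.

Lemma confl_mono (A B D : obj C) (f : hom C A B) (g : hom C B D) :
  confl f g -> mono f.
Proof.
case/confl_kc => [[H0 H] _] T u v E.
have : g ° (f ° u) = 0 by rewrite compA H0 comp0m.
case/H => w [Hw Hu].
by rewrite -(Hu u) // (Hu v).
Qed.

Lemma confl_epi (A B D : obj C) (f : hom C A B) (g : hom C B D) :
  confl f g -> epi g.
Proof.
case/confl_kc => [_ [H0 H]] T u v E.
have : (u ° g) ° f = 0 by rewrite -compA H0 compm0.
case/H => w [Hw Hu].
by rewrite -(Hu u) // (Hu v).
Qed.

Lemma iso_id (X : obj C) : is_iso (idm X).
Proof. by exists (idm X); rewrite comp1m. Qed.

Lemma iso_inv (X Y : obj C) (f : hom C X Y) (g : hom C Y X) :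
  g ° f = idm X -> f ° g = idm Y -> is_iso f /\ is_iso g.
Proof. by move=> h1 h2; split; [exists g | exists f]. Qed.

Lemma ker_confl (K B D F : obj C) (k : hom C K B) (p : hom C B D) (f : hom C F B) :
  confl k p -> p ° f = 0 ->
  (forall T (h : hom C T B), p ° h = 0 -> exists u, f ° u = h) -> mono f ->
  confl f p.
Proof.
move=> Hk Hf Hl Hm.
have [phi Hphi] := confl_lift Hk Hf.
have [psi Hpsi] := Hl _ _ (confl_comp0 Hk).
have E1 : phi ° psi = idm K.
  by apply: (confl_mono Hk); rewrite compA Hphi Hpsi compm1.
have E2 : psi ° phi = idm F.
  by apply: Hm; rewrite compA Hpsi Hphi compm1.
apply: (confl_iso (a := psi) (b := idm B) (c := idm D) Hk).
- by exists phi.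
- exact: iso_id.
- exact: iso_id.
- by rewrite Hpsi comp1m.
- by rewrite comp1m compm1.
Qed.

Lemma coker_confl (A B D D' : obj C) (f : hom C A B) (g : hom C B D) (g' : hom C B D') :
  confl f g -> g' ° f = 0 ->
  (forall T (h : hom C B T), h ° f = 0 -> exists u, u ° g' = h) -> epi g' ->
  confl f g'.
Proof.
move=> Hf Hg He Hep.
have [phi Hphi] := confl_desc Hf Hg.
have [psi Hpsi] := He _ _ (confl_comp0 Hf).
have E1 : phi ° psi = idm D'.
  by apply: Hep; rewrite -compA Hpsi Hphi comp1m.
have E2 : psi ° phi = idm D.
  by apply: (confl_epi Hf); rewrite -compA Hphi Hpsi comp1m.
apply: (confl_iso (a := idm A) (b := idm B) (c := phi) Hf).
- exact: iso_id.
- exact: iso_id.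
- by exists psi.
- by rewrite comp1m compm1.
- by rewrite compm1 Hphi.
Qed.

Lemma defl_precomp_iso (K B B' D : obj C) (k : hom C K B) (p : hom C B D) (phi : hom C B' B) :
  confl k p -> is_iso phi -> exists k' : hom C K B', confl k' (p ° phi).
Proof.
move=> Hk [psi [h1 h2]].
exists (psi ° k).
apply: (confl_iso (a := idm K) (b := psi) (c := idm D) Hk).
- exact: iso_id.
- by exists phi.
- exact: iso_id.
- by rewrite compm1.
- by rewrite comp1m -compA h2 compm1.
Qed.

Lemma defl_postcomp_iso (K B D D' : obj C) (k : hom C K B) (p : hom C B D) (phi : hom C D D') :
  confl k p -> is_iso phi -> confl k (phi ° p).
Proof.
move=> Hk Hphi.
apply: (confl_iso (a := idm K) (b := idm B) (c := phi) Hk) => //; try exact: iso_id.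
- by rewrite comp1m compm1.
- by rewrite compm1.
Qed.

Lemma infl_postcomp_iso (K B B' D : obj C) (k : hom C K B) (p : hom C B D) (phi : hom C B B') :
  confl k p -> is_iso phi -> exists p' : hom C B' D, confl (phi ° k) p'.
Proof.
move=> Hk [psi [h1 h2]].
exists (p ° psi).
apply: (confl_iso (a := idm K) (b := phi) (c := idm D) Hk).
- exact: iso_id.
- by exists psi.
- exact: iso_id.
- by rewrite compm1.
- by rewrite comp1m -compA h1 compm1.
Qed.

Lemma infl_precomp_iso (K K' B D : obj C) (k : hom C K B) (p : hom C B D) (phi : hom C K' K) :
  confl k p -> is_iso phi -> confl (k ° phi) p.
Proof.
move=> Hk [psi [h1 h2]].
apply: (confl_iso (a := psi) (b := idm B) (c := idm D) Hk).
- by exists phi.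
- exact: iso_id.
- exact: iso_id.
- by rewrite -compA h2 compm1 comp1m.
- by rewrite comp1m compm1.
Qed.

Section PB.
Variables (B D E P : obj C) (p : hom C B E) (h : hom C D E) (p' : hom C P D) (h' : hom C P B).
Hypothesis Hpb : is_pullback p h p' h'.

Lemma pb_comm : p ° h' = h ° p'.
Proof. by case: Hpb. Qed.

Lemma pb_lift Q (x : hom C Q D) (y : hom C Q B) :
  h ° x = p ° y -> exists u, p' ° u = x /\ h' ° u = y.
Proof. by case: Hpb => _ H /H [u [Hu _]]; exists u. Qed.

Lemma pb_uniq Q (u v : hom C Q P) :
  p' ° u = p' ° v -> h' ° u = h' ° v -> u = v.
Proof.
case: Hpb => H0 H E1 E2.
have : h ° (p' ° v) = p ° (h' ° v) by rewrite !compA H0.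
case/H => w [Hw Hu].
by rewrite -(Hu u) ?E1 ?E2 // (Hu v).
Qed.

Lemma pb_sym : is_pullback h p h' p'.
Proof.
split; first by rewrite pb_comm.
move=> Q x y Exy.
have [u [h1 h2]] := pb_lift (esym Exy).
exists u; split => // v [v1 v2].
by apply: pb_uniq; rewrite ?h1 ?h2.
Qed.

End PB.

Lemma pb_defl (B D E P K : obj C) (p : hom C B E) (h : hom C D E) (p' : hom C P D) (h' : hom C P B)
  (k : hom C K B) :
  is_pullback p h p' h' -> confl k p -> exists k' : hom C K P, h' ° k' = k /\ confl k' p'.
Proof.
move=> Hpb Hk.
case: HC => _ [_ [_ HR2]].
have [P2 [q [r [Hpb2 [K2 [k2 Hq]]]]]] := HR2 _ _ _ p h (ex_intro _ _ (ex_intro _ _ Hk)).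
have [phi [f1 f2]] := pb_lift Hpb2 (esym (pb_comm Hpb)).
have [psi [g1 g2]] := pb_lift Hpb (esym (pb_comm Hpb2)).
have E1 : phi ° psi = idm P2.
  by apply: (pb_uniq Hpb2); rewrite compA ?f1 ?f2 ?g1 ?g2 compm1.
have E2 : psi ° phi = idm P.
  by apply: (pb_uniq Hpb); rewrite compA ?f1 ?f2 ?g1 ?g2 compm1.
have [k0 Hk0] := defl_precomp_iso Hq (ex_intro _ psi (conj E2 E1)).
rewrite f1 in Hk0.
have [k' [e1 e2]] : exists u : hom C K P, p' ° u = 0 /\ h' ° u = k.
  by apply: (pb_lift Hpb); rewrite compm0 (confl_comp0 Hk).
exists k'; split => //.
apply: (ker_confl Hk0 e1).
- move=> T z Hz.
  have : p ° (h' ° z) = 0 by rewrite compA (pb_comm Hpb) -compA Hz compm0.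
  case/(confl_lift Hk) => u Hu.
  exists u; apply: (pb_uniq Hpb).
  + by rewrite compA e1 comp0m Hz.
  + by rewrite compA e2 Hu.
- move=> T u v Euv.
  apply: (confl_mono Hk).
  by rewrite -e2 -!compA Euv.
Qed.


Lemma mk_pb (B D E P : obj C) (p : hom C B E) (h : hom C D E) (p' : hom C P D) (h' : hom C P B) :
  p ° h' = h ° p' ->
  (forall Q (x : hom C Q D) (y : hom C Q B), h ° x = p ° y -> exists u, p' ° u = x /\ h' ° u = y) ->
  (forall Q (u v : hom C Q P), p' ° u = p' ° v -> h' ° u = h' ° v -> u = v) ->
  is_pullback p h p' h'.
Proof.
move=> H0 Hl Hu; split => // Q x y Exy.
have [u [h1 h2]] := Hl _ _ _ Exy.
exists u; split => // v [v1 v2].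
by apply: Hu; rewrite ?h1 ?h2.
Qed.

Lemma mk_po (E D A P : obj C) (a : hom C E D) (b : hom C E A) (b' : hom C D P) (a' : hom C A P) :
  is_pushout a b b' a' ->
  forall Q (x : hom C D Q) (y : hom C A Q), x ° a = y ° b -> exists u, u ° b' = x /\ u ° a' = y.
Proof. by case=> _ H Q x y /H [u [Hu _]]; exists u. Qed.

Lemma po_uniq (E D A P : obj C) (a : hom C E D) (b : hom C E A) (b' : hom C D P) (a' : hom C A P) :
  is_pushout a b b' a' ->
  forall Q (u v : hom C P Q), u ° b' = v ° b' -> u ° a' = v ° a' -> u = v.
Proof.
case=> H0 H Q u v E1 E2.
have : (v ° b') ° a = (v ° a') ° b by rewrite -!compA H0.
case/H => w [Hw Hu].
by rewrite -(Hu u) ?E1 ?E2 // (Hu v).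
Qed.

Lemma defl_id (X : obj C) : confl (0 : hom C zobj X) (idm X).
Proof.
case: HC => _ [[K0 [k0 Hk0]] [_ HR2]].
have [P [q [r [Hpb _]]]] := HR2 _ _ _ (idm zobj) (0 : hom C X zobj) (ex_intro _ _ (ex_intro _ _ Hk0)).
have [k [_ Hk]] := pb_defl Hpb Hk0.
have [u [u1 u2]] : exists u : hom C X P, q ° u = idm X /\ r ° u = 0.
  by apply: (pb_lift Hpb); apply: zobj_term.
have E2 : u ° q = idm P.
  by apply: (pb_uniq Hpb); [rewrite compA u1 comp1m compm1 | apply: zobj_term].
have [k1 Hk1] := defl_precomp_iso Hk (ex_intro _ q (conj u1 E2)).
rewrite u1 in Hk1.
apply: (ker_confl Hk1); first by rewrite comp1m.
- move=> T h; rewrite comp1m => ->; exists 0; exact: compm0.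
- by move=> T u0 v0 _; rewrite (zterm u0) (zterm v0).
Qed.

Lemma split1 (A B : obj C) : confl (idm A) (0 : hom C A zobj) ->
  confl (bp_i1 A B) (bp_p2 A B).
Proof.
move=> Hk.
have Hpb : is_pullback (0 : hom C A zobj) (0 : hom C B zobj) p2 p1.
  apply: mk_pb; first by rewrite !comp0m.
  - move=> Q x y _; exists (i1 ° y + i2 ° x); split; by cnorm.
  - by move=> Q u v e1 e2; apply: bp_ext.
have [k' [e1 e2]] := pb_defl Hpb Hk.
suff -> : bp_i1 A B = k' by [].
apply: bp_ext; cnorm; first by rewrite e1.
by rewrite (confl_comp0 e2).
Qed.

Lemma split2 (A B : obj C) : confl (idm B) (0 : hom C B zobj) ->
  confl (bp_i2 A B) (bp_p1 A B).
Proof.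
move=> Hk.
have Hpb : is_pullback (0 : hom C B zobj) (0 : hom C A zobj) p1 p2.
  apply: mk_pb; first by rewrite !comp0m.
  - move=> Q x y _; exists (i1 ° x + i2 ° y); split; by cnorm.
  - by move=> Q u v e1 e2; apply: bp_ext.
have [k' [e1 e2]] := pb_defl Hpb Hk.
suff -> : bp_i2 A B = k' by [].
apply: bp_ext; cnorm; last by rewrite e1.
by rewrite (confl_comp0 e2).
Qed.

Variable Aset : obj C -> Prop.
Hypothesis HA : adm_deflation_percolating confl Aset.

Lemma HA1 (A' A A'' : obj C) (f : hom C A' A) (g : hom C A A'') :
  confl f g -> (Aset A <-> Aset A' /\ Aset A'').
Proof. by case: HA => _ [H _]; apply: H. Qed.

Lemma HA2 (X A : obj C) (h : hom C X A) : Aset A ->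
  exists (A' : obj C) (d : hom C X A') (i : hom C A' A),
    Aset A' /\ deflation confl d /\ inflation confl i /\ h = i ° d.
Proof. by case: HA => _ [_ [H _]]; apply: H. Qed.

Lemma HA3 (E D A : obj C) (a : hom C E D) (b : hom C E A) :
  inflation confl a -> deflation confl b -> Aset A ->
  exists (P : obj C) (b' : hom C D P) (a' : hom C A P),
    is_pushout a b b' a' /\ deflation confl b' /\ inflation confl a'.
Proof. by case: HA => _ [_ [_ H]]; apply: H. Qed.

Lemma HR1 (X Y Z : obj C) (f : hom C X Y) (g : hom C Y Z) :
  deflation confl f -> deflation confl g -> deflation confl (g ° f).
Proof. by case: HC => _ [_ [H _]]; apply: H. Qed.

Lemma Aset_zero : Aset zobj.
Proof.
case: HA => [[A0 H0] _].
by case: (HA1 (defl_id A0)) => /(_ H0) [].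
Qed.

Lemma to_zero (X : obj C) : confl (idm X) (0 : hom C X zobj).
Proof.
have [A' [d [i [_ [[K [k Hk]] [[Z [c Hi]] E]]]]]] := HA2 (0 : hom C X zobj) Aset_zero.
have Hiso : is_iso i.
  exists 0; split; last by apply: zobj_init.
  by apply: (confl_mono Hi); apply: zobj_term.
have H0 := defl_postcomp_iso Hk Hiso.
rewrite -E in H0.
apply: (ker_confl H0); first by apply: zobj_term.
- by move=> T h _; exists h; rewrite comp1m.
- by move=> T u v; rewrite !comp1m.
Qed.

Lemma Adefl_id (X : obj C) : A_deflation confl Aset (idm X).
Proof. exists zobj, 0; split; [exact: defl_id | exact: Aset_zero]. Qed.

Lemma Ainfl_id (X : obj C) : A_inflation confl Aset (idm X).
Proof. exists zobj, 0; split; [exact: to_zero | exact: Aset_zero]. Qed.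

Lemma conflS1 (A B : obj C) : confl (bp_i1 A B) (bp_p2 A B).
Proof. exact: split1 (to_zero A). Qed.

Lemma conflS2 (A B : obj C) : confl (bp_i2 A B) (bp_p1 A B).
Proof. exact: split2 (to_zero B). Qed.

Lemma epiA_defl (B A0 : obj C) (p : hom C B A0) :
  epi p -> Aset A0 -> exists K (k : hom C K B), confl k p.
Proof.
move=> Hep HA0.
have [A' [d [i [_ [[K [k Hk]] [[Z [c Hi]] E]]]]]] := HA2 p HA0.
have Hie : epi i.
  by move=> T u v Euv; apply: Hep; rewrite E !compA Euv.
have Hc : c = 0.
  by apply: Hie; rewrite comp0m (confl_comp0 Hi).
have [s Hs] : exists s, i ° s = idm A0.
  by apply: (confl_lift Hi); rewrite Hc comp0m.
have Hiso : is_iso i.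
  exists s; split => //.
  by apply: (confl_mono Hi); rewrite compA Hs comp1m compm1.
exists K, k; rewrite E; exact: defl_postcomp_iso.
Qed.

Lemma monodefl_iso (K B D : obj C) (k : hom C K B) (d : hom C B D) :
  confl k d -> mono d -> is_iso d.
Proof.
move=> Hk Hm.
have Hk0 : k = 0 by apply: Hm; rewrite compm0 (confl_comp0 Hk).
have [t Ht] : exists t, t ° d = idm B by apply: (confl_desc Hk); rewrite Hk0 compm0.
exists t; split => //.
by apply: (confl_epi Hk); rewrite -compA Ht compm1 comp1m.
Qed.

Lemma split_iso (T0 Y K : obj C) (t1 : hom C T0 Y) (s : hom C Y T0) (k : hom C K T0) :
  t1 ° s = idm Y -> confl k t1 ->
  exists tau : hom C T0 K, k ° tau = idm T0 - s ° t1 /\ tau ° s = 0 /\ tau ° k = idm K /\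
    is_iso (s ° bp_p1 Y K + k ° bp_p2 Y K).
Proof.
move=> Hs Hk.
have [tau Ht] : exists tau, k ° tau = idm T0 - s ° t1.
  by apply: (confl_lift Hk); rewrite compBr compA Hs comp1m compm1 subrr.
have Hts : tau ° s = 0.
  by apply: (confl_mono Hk); rewrite compA Ht compm0 compBl comp1m -compA Hs compm1 subrr.
have Htk : tau ° k = idm K.
  apply: (confl_mono Hk); rewrite compA Ht compBl comp1m compm1 -compA (confl_comp0 Hk).
  by rewrite compm0 subr0.
exists tau; do 3!split => //.
exists (i1 ° t1 + i2 ° tau); split.
- apply: bp_ext_out; cnorm; by rewrite ?Hs ?Hts ?Htk ?(confl_comp0 Hk); cnorm.
- by cnorm; rewrite Ht addrC subrK.
Qed.

Lemma section_infl (T0 Y K : obj C) (t1 : hom C T0 Y) (s : hom C Y T0) (k : hom C K T0) :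
  t1 ° s = idm Y -> confl k t1 -> exists tau : hom C T0 K, confl s tau.
Proof.
move=> Hs Hk.
have [tau [Ht [Hts [Htk Hiso]]]] := split_iso Hs Hk.
exists tau.
apply: (confl_iso (a := idm Y) (b := s ° p1 + k ° p2) (c := idm K) (conflS1 Y K)) => //;
  try exact: iso_id; cnorm => //.
by rewrite (eqr _ Hts) (eqr _ Htk); cnorm.
Qed.

Lemma mono_of_zero (X Y : obj C) (f : hom C X Y) :
  (forall T (x : hom C T X), f ° x = 0 -> x = 0) -> mono f.
Proof.
move=> H T u v Euv; apply/eqP; rewrite -subr_eq0; apply/eqP; apply: H.
by rewrite compBr Euv subrr.
Qed.

Lemma mono_comp (X Y Z : obj C) (f : hom C X Y) (g : hom C Y Z) :
  mono f -> mono g -> mono (g ° f).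
Proof. by move=> Hf Hg T u v; rewrite -!compA => /Hg /Hf. Qed.

Lemma epi_comp (X Y Z : obj C) (f : hom C X Y) (g : hom C Y Z) :
  epi f -> epi g -> epi (g ° f).
Proof. by move=> Hf Hg T u v; rewrite !compA => /Hf /Hg. Qed.

Lemma infl_cancel (M Y Z Q Q2 : obj C) (i : hom C Y Z) (c : hom C Z Q) (m : hom C M Y)
  (c2 : hom C Z Q2) :
  confl i c -> confl (i ° m) c2 -> Aset Q2 -> A_inflation confl Aset m.
Proof.
move=> Hi Him HQ2.
have [R [e [j [HR [[Kw [w Hw]] [[Zj [n Hj]] E]]]]]] := HA2 (c2 ° i) HQ2.
exists R, e; split => //.
apply: (ker_confl Hw).
- apply: (confl_mono Hj); rewrite compm0 compA -E -compA.
  exact: (confl_comp0 Him).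
- move=> T z Hz.
  have : c2 ° (i ° z) = 0 by rewrite compA E -compA Hz compm0.
  case/(confl_lift Him) => u Hu.
  by exists u; apply: (confl_mono Hi); rewrite compA.
- move=> T u v Euv; apply: (confl_mono Him).
  by rewrite -!compA Euv.
Qed.

Lemma Adefl_comp (X Y Z : obj C) (d1 : hom C X Y) (d2 : hom C Y Z) :
  A_deflation confl Aset d1 -> A_deflation confl Aset d2 -> A_deflation confl Aset (d2 ° d1).
Proof.
move=> [K1 [k1 [Hk1 HK1]]] [K2 [k2 [Hk2 HK2]]].
have [K [k Hk]] := HR1 (ex_intro _ _ (ex_intro _ _ Hk1)) (ex_intro _ _ (ex_intro _ _ Hk2)).
case: HC => _ [_ [_ HR2]].
have [P [p' [h' [Hpb _]]]] := HR2 _ _ _ d1 k2 (ex_intro _ _ (ex_intro _ _ Hk1)).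
have [k1' [_ Hk1']] := pb_defl Hpb Hk1.
exists P, h'; split; last first.
  by case: (HA1 Hk1') => _; apply.
apply: (ker_confl Hk).
- by rewrite -compA (pb_comm Hpb) compA (confl_comp0 Hk2) comp0m.
- move=> T z Hz.
  have [y Hy] := confl_lift Hk2 (etrans (compA _ _ _) Hz).
  have [u [u1 u2]] := pb_lift Hpb Hy.
  by exists u.
- move=> T u v Euv; apply: (pb_uniq Hpb) => //.
  apply: (confl_mono Hk2).
  by rewrite !compA -(pb_comm Hpb) -!compA Euv.
Qed.

Lemma Ainfl_comp (X Y Z : obj C) (f1 : hom C X Y) (f2 : hom C Y Z) :
  A_inflation confl Aset f1 -> A_inflation confl Aset f2 -> A_inflation confl Aset (f2 ° f1).
Proof.
move=> [Q1 [c1 [Hc1 HQ1]]] [Q2 [c2 [Hc2 HQ2]]].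
have [P [b' [a' [Hpo [[Kb [kb Hb]] [Za [ca Ha]]]]]]] :=
  HA3 (ex_intro _ _ (ex_intro _ _ Hc2)) (ex_intro _ _ (ex_intro _ _ Hc1)) HQ1.
have [pi [pi1 pi2]] : exists pi : hom C P Q2, pi ° b' = c2 /\ pi ° a' = 0.
  by apply: (mk_po Hpo); rewrite comp0m (confl_comp0 Hc2).
case: (Hpo) => Hpo0 _.
exists P, b'; split.
- apply: (ker_confl Hb).
  + by rewrite compA Hpo0 -compA (confl_comp0 Hc1) compm0.
  + move=> T z Hz.
    have : c2 ° z = 0 by rewrite -pi1 -compA Hz compm0.
    case/(confl_lift Hc2) => y Hy.
    have : c1 ° y = 0.
      by apply: (confl_mono Ha); rewrite compm0 compA -Hpo0 -compA Hy.
    case/(confl_lift Hc1) => x Hx.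
    by exists x; rewrite -compA Hx.
  + exact: mono_comp (confl_mono Hc1) (confl_mono Hc2).
- have Hpa : confl a' pi.
    apply: (coker_confl Ha pi2).
    * move=> T h Hh.
      have : (h ° b') ° f2 = 0 by rewrite -compA Hpo0 compA Hh comp0m.
      case/(confl_desc Hc2) => z Hz.
      exists z; apply: (confl_epi Hb).
      by rewrite -compA pi1.
    * move=> T u v Euv; apply: (confl_epi Hc2).
      by rewrite -pi1 !compA Euv.
  by case: (HA1 Hpa) => _; apply.
Qed.

Lemma Dprime (X Y Mt K1 K2 L : obj C) (d1 : hom C X Y) (e : hom C Y Mt) (d2 : hom C X Mt)
  (k1 : hom C K1 X) (k2 : hom C K2 X) (u : hom C K1 K2) (v : hom C K2 L) :
  e ° d1 = d2 -> confl k1 d1 -> confl k2 d2 -> k2 ° u = k1 -> confl u v -> Aset L ->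
  A_deflation confl Aset e.
Proof.
move=> Ed Hk1 Hk2 Eu Huv HL.
have [P [b' [a' [Hpo [[Kb [kb Hb]] [Za [ca Ha]]]]]]] :=
  HA3 (ex_intro _ _ (ex_intro _ _ Hk2)) (ex_intro _ _ (ex_intro _ _ Huv)) HL.
case: (Hpo) => Hpo0 _.
have [wv Hwv] : exists wv : hom C L Y, wv ° v = d1 ° k2.
  by apply: (confl_desc Huv); rewrite -compA Eu (confl_comp0 Hk1).
have [t Ht] : exists t : hom C Y P, t ° d1 = b'.
  by apply: (confl_desc Hk1); rewrite -Eu compA Hpo0 -compA (confl_comp0 Huv) compm0.
have [s [s1 s2]] : exists s : hom C P Y, s ° b' = d1 /\ s ° a' = wv.
  by apply: (mk_po Hpo).
have E1 : s ° t = idm Y.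
  by apply: (confl_epi Hk1); rewrite -compA Ht s1 comp1m.
have E2 : t ° s = idm P.
  apply: (po_uniq Hpo).
  - by rewrite -compA s1 Ht comp1m.
  - rewrite -compA s2 comp1m; apply: (confl_epi Huv).
    by rewrite -compA Hwv compA Ht Hpo0.
have [c' Hc'] := infl_postcomp_iso Ha (ex_intro _ t (conj E2 E1)).
rewrite s2 in Hc'.
exists L, wv; split => //.
apply: (coker_confl Hc').
- apply: (confl_epi Huv); rewrite comp0m -compA Hwv compA Ed.
  exact: (confl_comp0 Hk2).
- move=> T h Hh.
  have : (h ° d1) ° k2 = 0 by rewrite -compA -Hwv compA Hh comp0m.
  case/(confl_desc Hk2) => z Hz.
  exists z; apply: (confl_epi Hk1).
  by rewrite -compA Ed.
- move=> T a b Eab; apply: (confl_epi Hk2).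
  by rewrite -Ed !compA Eab.
Qed.

Lemma Dcancel (X Y Mt K1 : obj C) (d1 : hom C X Y) (e : hom C Y Mt) (d2 : hom C X Mt)
  (k1 : hom C K1 X) :
  e ° d1 = d2 -> confl k1 d1 -> A_deflation confl Aset d2 -> A_deflation confl Aset e.
Proof.
move=> Ed Hk1 [K2 [k2 [Hk2 HK2]]].
have [u Hu] : exists u, k2 ° u = k1.
  by apply: (confl_lift Hk2); rewrite -Ed -compA (confl_comp0 Hk1) compm0.
have Hum : mono u.
  move=> T a b Eab; apply: (confl_mono Hk1).
  by rewrite -Hu -!compA Eab.
have [A' [dd [jj [HA' [[Kd [kd Hd]] [[L [vv Hj]] Eu]]]]]] := HA2 u HK2.
have Hdm : mono dd.
  by move=> T a b Eab; apply: Hum; rewrite Eu -!compA Eab.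
have Hdiso := monodefl_iso Hd Hdm.
have Huv : confl u vv by rewrite Eu; apply: infl_precomp_iso.
have HL : Aset L by case: (HA1 Hj) => /(_ HK2) [].
exact: (Dprime Ed Hk1 Hk2 Hu Huv HL).
Qed.

Lemma swap (X Y Z : obj C) (i : hom C X Y) (d : hom C Y Z) :
  A_inflation confl Aset i -> A_deflation confl Aset d ->
  exists N (s : hom C X N) (ii : hom C N Z),
    A_deflation confl Aset s /\ A_inflation confl Aset ii /\ d ° i = ii ° s.
Proof.
move=> [Q [c [Hi HQ]]] [K [k [Hk HK]]].
have [A' [e [j [HA' [[K' [kap He]] [[Q'' [n Hj]] Ecj]]]]]] := HA2 (c ° k) HQ.
have [P [b' [a' [Hpo [[Kb [kb Hb]] [Za [ca Ha]]]]]]] :=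
  HA3 (ex_intro _ _ (ex_intro _ _ Hk)) (ex_intro _ _ (ex_intro _ _ He)) HA'.
case: (Hpo) => Hpo0 _.
have [pi [pi1 pi2]] : exists pi : hom C P Z, pi ° b' = d /\ pi ° a' = 0.
  by apply: (mk_po Hpo); rewrite comp0m (confl_comp0 Hk).
have Hapi : confl a' pi.
  apply: (coker_confl Ha pi2).
  - move=> T h Hh.
    have : (h ° b') ° k = 0 by rewrite -compA Hpo0 compA Hh comp0m.
    case/(confl_desc Hk) => z Hz.
    exists z; apply: (confl_epi Hb); by rewrite -compA pi1.
  - move=> T u v Euv; apply: (confl_epi Hk); by rewrite -pi1 !compA Euv.
have [rho [rho1 rho2]] : exists rho : hom C P Q, rho ° b' = c /\ rho ° a' = j.
  by apply: (mk_po Hpo); rewrite Ecj.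
have [N [eta Heta]] : exists N (eta : hom C N P), confl eta rho.
  apply: epiA_defl HQ => T u v Euv; apply: (confl_epi Hi); by rewrite -rho1 !compA Euv.
have [s Hs] : exists s : hom C X N, eta ° s = b' ° i.
  by apply: (confl_lift Heta); rewrite compA rho1 (confl_comp0 Hi).
have Hpb : is_pullback b' eta s i.
  apply: mk_pb; first by rewrite Hs.
  - move=> T x y Exy.
    have : c ° y = 0 by rewrite -rho1 -compA -Exy compA (confl_comp0 Heta) comp0m.
    case/(confl_lift Hi) => z Hz.
    exists z; split; last exact: Hz.
    apply: (confl_mono Heta); by rewrite compA Hs -compA Hz Exy.
  - move=> T u v _ Euv; exact: (confl_mono Hi).
have HK' : Aset K' by case: (HA1 He) => /(_ HK) [].
have Hkb : confl (k ° kap) b'.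
  apply: (ker_confl Hb).
  - by rewrite compA Hpo0 -compA (confl_comp0 He) compm0.
  - move=> T z Hz.
    have : d ° z = 0 by rewrite -pi1 -compA Hz compm0.
    case/(confl_lift Hk) => y Hy.
    have : e ° y = 0.
      apply: (confl_mono Ha); rewrite compm0 compA -Hpo0 -compA Hy; exact: Hz.
    case/(confl_lift He) => t Ht.
    by exists t; rewrite -compA Ht Hy.
  - exact: mono_comp (confl_mono He) (confl_mono Hk).
have [k'' [_ Hk'']] := pb_defl Hpb Hkb.
exists N, s, (pi ° eta); split; first by exists K', k''; split.
split; last by rewrite -compA Hs compA pi1.
have HQ'' : Aset Q'' by case: (HA1 Hj) => /(_ HQ) [].
have [w Hw] : exists w : hom C Z Q'', w ° pi = n ° rho.
  by apply: (confl_desc Hapi); rewrite -compA rho2 (confl_comp0 Hj).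
have Hnr : epi (n ° rho).
  apply: epi_comp; last exact: (confl_epi Hj).
  move=> T u v Euv; apply: (confl_epi Hi); by rewrite -rho1 !compA Euv.
have [Kw [kw Hkw]] : exists Kw (kw : hom C Kw Z), confl kw w.
  apply: epiA_defl HQ'' => T u v Euv; apply: Hnr; by rewrite -Hw !compA Euv.
exists Q'', w; split => //.
apply: (ker_confl Hkw).
- by rewrite compA Hw -compA (confl_comp0 Heta) compm0.
- move=> T z Hz.
  case: HC => _ [_ [_ HR2]].
  have [T' [tau [z' [Hpb2 _]]]] := HR2 _ _ _ pi z (ex_intro _ _ (ex_intro _ _ Hapi)).
  have [kt [kt1 Hkt]] := pb_defl Hpb2 Hapi.
  have [a Ha'] : exists a : hom C T' A', j ° a = rho ° z'.
    apply: (confl_lift Hj); by rewrite compA -Hw -compA (pb_comm Hpb2) compA Hz comp0m.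
  have [x' Hx'] : exists x' : hom C T' N, eta ° x' = z' - a' ° a.
    apply: (confl_lift Heta); by rewrite compBr compA rho2 Ha' subrr.
  have Hakt : a ° kt = idm A'.
    apply: (confl_mono Hj); by rewrite compA Ha' -compA kt1 rho2 compm1.
  have Hx'kt : x' ° kt = 0.
    apply: (confl_mono Heta).
    by rewrite compA Hx' compBl kt1 -compA Hakt compm1 subrr compm0.
  have [x Hx] : exists x : hom C T N, x ° tau = x'.
    by apply: (confl_desc Hkt).
  exists x; apply: (confl_epi Hkt).
  by rewrite -!compA Hx Hx' compBr (eqr _ pi2) comp0m subr0 (pb_comm Hpb2).
- apply: mono_of_zero => T x Hx.
  have [a0 Ha0] : exists a0 : hom C T A', a' ° a0 = eta ° x.
    by apply: (confl_lift Hapi); rewrite compA.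
  have Ea0 : a0 = 0.
    apply: (confl_mono Hj); rewrite compm0 -rho2 -compA Ha0 compA.
    by rewrite (confl_comp0 Heta) comp0m.
  apply: (confl_mono Heta); by rewrite compm0 -Ha0 Ea0 compm0.
Qed.

Lemma Eprime (W Y R M P N : obj C) (w : hom C W Y) (e : hom C Y R) (m : hom C M P)
  (pi : hom C P R) (g' : hom C Y P) (gt : hom C W M) (psi : hom C N W) :
  confl w e -> confl m pi -> g' ° w = m ° gt -> pi ° g' = e -> confl psi gt -> Aset N ->
  A_deflation confl Aset g'.
Proof.
move=> Hw Hm Eg Epi Hpsi HN.
have Hker : forall T (z : hom C T Y), g' ° z = 0 -> exists n, w ° (psi ° n) = z.
  move=> T z Hz.
  have : e ° z = 0 by rewrite -Epi -compA Hz compm0.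
  case/(confl_lift Hw) => z1 Hz1.
  have : gt ° z1 = 0.
    apply: (confl_mono Hm); by rewrite compm0 compA -Eg -compA Hz1.
  case/(confl_lift Hpsi) => n Hn.
  by exists n; rewrite Hn.
have Hwpsi : mono (w ° psi) := mono_comp (confl_mono Hpsi) (confl_mono Hw).
have Hgwpsi : g' ° (w ° psi) = 0.
  by rewrite compA Eg -compA (confl_comp0 Hpsi) compm0.
case: HC => _ [_ [_ HR2]].
have [T0 [t1 [t2 [Hpb _]]]] := HR2 _ _ _ pi e (ex_intro _ _ (ex_intro _ _ Hm)).
have [k0 [tk0 Hk0]] := pb_defl Hpb Hm.
have [kk [_ Ht2]] := pb_defl (pb_sym Hpb) Hw.
have [s [ts1 ts2]] : exists s : hom C Y T0, t1 ° s = idm Y /\ t2 ° s = g'.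
  by apply: (pb_lift Hpb); rewrite compm1 Epi.
have [tau [_ [_ [_ Hiso]]]] := split_iso ts1 Hk0.
have [kG HG] := defl_precomp_iso Ht2 Hiso.
have EG : t2 ° (s ° p1 + k0 ° p2) = g' ° p1 + m ° p2.
  by cnorm; rewrite (eqr _ ts2) (eqr _ tk0).
rewrite EG in HG.
pose H := i1 ° p1 + i2 ° (gt ° p2) : hom C (bp Y W) (bp Y M).
have Hpb3 : is_pullback gt p2 H p2.
  apply: mk_pb; first by rewrite /H; cnorm.
  - move=> Q x y Exy; exists (i1 ° (p1 ° x) + i2 ° y); rewrite /H; split; last by cnorm.
    by apply: bp_ext; cnorm; [done | rewrite Exy].
  - move=> Q u v E1 E2; apply: bp_ext => //.
    move: (f_equal (cmp p1) E1); rewrite /H; cnorm => Ep; exact: Ep.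
have [kH [_ HH]] := pb_defl Hpb3 Hpsi.
have [KD [kD HD]] := HR1 (ex_intro _ _ (ex_intro _ _ HH)) (ex_intro _ _ (ex_intro _ _ HG)).
have [d1 [k1 [Hk1 [Ed1i1 [Ek1p1 [Ek1p2 ED]]]]]] :
  exists (d1 : hom C (bp Y W) Y) (k1 : hom C W (bp Y W)),
    confl k1 d1 /\ d1 ° i1 = idm Y /\ p1 ° k1 = - w /\ p2 ° k1 = idm W /\
    (g' ° p1 + m ° p2) ° H = g' ° d1.
  exists (p1 + w ° p2), (i2 - i1 ° w); split.
    apply: (confl_iso (a := idm W) (b := idm (bp Y W) - i1 ° (w ° p2)) (c := idm Y) (conflS2 Y W)).
    - exact: iso_id.
    - exists (idm (bp Y W) + i1 ° (w ° p2)); split; cnorm.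
        by rewrite subrK.
      by rewrite addrK.
    - exact: iso_id.
    - by cnorm.
    - by cnorm; rewrite subrK.
  rewrite /H; do !split; cnorm => //.
  by rewrite (eqr _ Eg) -compA.
rewrite ED in HD.
have Hgwpsi' : forall T (f : hom C T N), g' ° (w ° (psi ° f)) = 0.
  by move=> T f; rewrite !compA -(compA g') Hgwpsi comp0m.
pose k2 := k1 ° bp_p1 W N + i1 ° (w ° (psi ° bp_p2 W N)).
have Hd1k1 : d1 ° k1 = 0 := confl_comp0 Hk1.
have Hk2 : confl k2 (g' ° d1).
  apply: (ker_confl HD).
  - rewrite /k2; cnorm; rewrite (eqr _ Hd1k1) (eqr _ Ed1i1); cnorm.
    by rewrite Hgwpsi'.
  - move=> T z Hz.
    have [nn Hnn] := Hker _ (d1 ° z) (etrans (compA _ _ _) Hz).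
    have : d1 ° (z - i1 ° (w ° (psi ° nn))) = 0.
      by rewrite compBr (eqr _ Ed1i1) comp1m Hnn subrr.
    case/(confl_lift Hk1) => y Hy.
    exists (bp_i1 W N ° y + bp_i2 W N ° nn); rewrite /k2; cnorm.
    by rewrite Hy subrK.
  - apply: mono_of_zero => T x0 Hx0.
    have Hq1 : bp_p1 W N ° x0 = 0.
      move: (f_equal (cmp p2) Hx0); rewrite /k2; cnorm; rewrite (eqr _ Ek1p2) comp1m; cnorm.
      by [].
    have Hq2 : bp_p2 W N ° x0 = 0.
      apply: Hwpsi; rewrite compm0 -compA.
      move: (f_equal (cmp p1) Hx0); rewrite /k2; cnorm; rewrite Hq1; cnorm.
      by [].
    by apply: bp_ext; rewrite ?Hq1 ?Hq2 compm0.
apply: (Dprime (erefl (g' ° d1)) Hk1 Hk2 _ (conflS1 W N) HN).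
by rewrite /k2; cnorm.
Qed.

Definition NF (X Y : obj C) (f : hom C X Y) :=
  exists M (d : hom C X M) (i : hom C M Y),
    A_deflation confl Aset d /\ A_inflation confl Aset i /\ f = i ° d.

Lemma S_NF (X Y : obj C) (f : hom C X Y) : S_A confl Aset f -> NF f.
Proof.
elim=> {X Y f} [X Y f Hf | X Y f Hf | X Y Z f g _ [M1 [d1 [j1 [Hd1 [Hj1 ->]]]]] _
  [M2 [d2 [j2 [Hd2 [Hj2 ->]]]]]].
- exists X, (idm X), f; split; first exact: Adefl_id.
  by split => //; rewrite compm1.
- exists Y, f, (idm Y); split => //; split; first exact: Ainfl_id.
  by rewrite comp1m.
- have [N [s [ii [Hs [Hii E]]]]] := swap Hj1 Hd2.
  exists N, (s ° d1), (j2 ° ii); split; first exact: Adefl_comp.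
  split; first exact: Ainfl_comp.
  by rewrite -!compA (eqr _ E) -compA.
Qed.

Lemma NF_S (X Y : obj C) (f : hom C X Y) : NF f -> S_A confl Aset f.
Proof.
case=> M [d [i [Hd [Hi ->]]]].
by apply: S_A_comp; [apply: S_A_defl | apply: S_A_infl].
Qed.

Lemma cancel_bi (X Y Z : obj C) (i : hom C Y Z) (f : hom C X Y) :
  A_inflation confl Aset i -> S_A confl Aset (i ° f) -> S_A confl Aset f.
Proof.
move=> [Q [c [Hi HQ]]] /S_NF [M [d2 [i2 [[K2 [k2 [Hk2 HK2]]] [[Q2 [c2 [Hc2 HQ2]]] E]]]]].
have Hci2 : c ° i2 = 0.
  apply: (confl_epi Hk2); rewrite comp0m -compA -E compA (confl_comp0 Hi).
  exact: comp0m.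
have [m Hm] := confl_lift Hi Hci2.
have Ef : f = m ° d2.
  by apply: (confl_mono Hi); rewrite E compA Hm.
rewrite -Hm in Hc2.
have Him := infl_cancel Hi Hc2 HQ2.
rewrite Ef; apply: NF_S.
exists M, d2, m; split; first by exists K2, k2.
by split.
Qed.

Lemma cancel_bd (X Y Z : obj C) (d : hom C Y Z) (f : hom C X Y) :
  A_deflation confl Aset d -> S_A confl Aset (d ° f) -> S_A confl Aset f.
Proof.
move=> [K [k [Hk HK]]] /S_NF [M [d2 [i2 [[K2 [k2 [Hk2 HK2]]] [[Q2 [c2 [Hc2 HQ2]]] E]]]]].
case: HC => _ [_ [_ HR2]].
have [P [pm [io [Hpb _]]]] := HR2 _ _ _ d i2 (ex_intro _ _ (ex_intro _ _ Hk)).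
have [kp [_ Hkp]] := pb_defl Hpb Hk.
have [Kc [kc Hcd]] := HR1 (ex_intro _ _ (ex_intro _ _ Hk)) (ex_intro _ _ (ex_intro _ _ Hc2)).
have Hio : confl io (c2 ° d).
  apply: (ker_confl Hcd).
  - by rewrite -compA (pb_comm Hpb) compA (confl_comp0 Hc2) comp0m.
  - move=> T z Hz.
    have [y Hy] := confl_lift Hc2 (etrans (compA _ _ _) Hz).
    have [u [u1 u2]] := pb_lift Hpb Hy.
    by exists u.
  - move=> T u v Euv; apply: (pb_uniq Hpb) => //.
    apply: (confl_mono Hc2).
    by rewrite !compA -(pb_comm Hpb) -!compA Euv.
have [ft [ft1 ft2]] := pb_lift Hpb (esym E).
have [R [r1 [r2 [Hpb2 _]]]] := HR2 _ _ _ d2 pm (ex_intro _ _ (ex_intro _ _ Hk2)).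
have [k3 [_ Hr1]] := pb_defl Hpb2 Hk2.
have [k4 [_ Hr2]] := pb_defl (pb_sym Hpb2) Hkp.
have [sg [sg1 sg2]] : exists sg : hom C X R, r1 ° sg = ft /\ r2 ° sg = idm X.
  by apply: (pb_lift Hpb2); rewrite compm1 ft1.
have [tau Hsg] := section_infl sg2 Hr2.
rewrite -ft2 -sg1.
apply: S_A_comp; last by apply: S_A_infl; exists Q2, (c2 ° d).
apply: S_A_comp; first by apply: S_A_infl; exists K, tau.
by apply: S_A_defl; exists K2, k3.
Qed.

Lemma cancel_ad (X Y Z : obj C) (d1 : hom C X Y) (g : hom C Y Z) :
  A_deflation confl Aset d1 -> S_A confl Aset (g ° d1) -> S_A confl Aset g.
Proof.
move=> [K1 [k1 [Hk1 HK1]]] /S_NF [M [d2 [i2 [Hd2 [[Q2 [c2 [Hc2 HQ2]]] E]]]]].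
have Hdk : d2 ° k1 = 0.
  apply: (confl_mono Hc2); rewrite compm0 compA -E -compA (confl_comp0 Hk1).
  exact: compm0.
have [e He] := confl_desc Hk1 Hdk.
have Eg : g = i2 ° e.
  by apply: (confl_epi Hk1); rewrite E -compA He.
have Hed := Dcancel He Hk1 Hd2.
rewrite Eg; apply: S_A_comp; first exact: S_A_defl.
by apply: S_A_infl; exists Q2, c2.
Qed.

Lemma cancel_ai (X Y Z : obj C) (i1 : hom C X Y) (g : hom C Y Z) :
  A_inflation confl Aset i1 -> S_A confl Aset (g ° i1) -> S_A confl Aset g.
Proof.
move=> [Q1 [c1 [Hi1 HQ1]]] /S_NF [M [d2 [i2 [[K2 [k2 [Hk2 HK2]]] [[Q2 [c2 [Hc2 HQ2]]] E]]]]].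
have [R [e [j [HR [[W [w Hw]] [[Tn [n Hjn]] Ee]]]]]] := HA2 (c2 ° g) HQ2.
have HTn : Aset Tn by case: (HA1 Hjn) => /(_ HQ2) [].
have [Kp [p Hp]] := HR1 (ex_intro _ _ (ex_intro _ _ Hc2)) (ex_intro _ _ (ex_intro _ _ Hjn)).
have [g' Hg'] : exists g', p ° g' = g.
  by apply: (confl_lift Hp); rewrite -compA Ee compA (confl_comp0 Hjn) comp0m.
have [m Hm] : exists m, p ° m = i2.
  by apply: (confl_lift Hp); rewrite -compA (confl_comp0 Hc2) compm0.
have [pi Hpi] : exists pi, j ° pi = c2 ° p.
  by apply: (confl_lift Hjn); rewrite compA (confl_comp0 Hp).
have Epi : pi ° g' = e.
  by apply: (confl_mono Hjn); rewrite compA Hpi -compA Hg' Ee.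
have Hmpi : confl m pi.
  have [Kq [q Hq]] : exists Kq (q : hom C Kq Kp), confl q pi.
    apply: epiA_defl HR => T u v Euv; apply: (confl_epi Hw).
    by rewrite -Epi !compA Euv.
  apply: (ker_confl Hq).
  - apply: (confl_mono Hjn).
    by rewrite compA Hpi -compA Hm (confl_comp0 Hc2) !compm0.
  - move=> T z Hz.
    have : c2 ° (p ° z) = 0.
      by rewrite compA -Hpi -compA Hz compm0.
    case/(confl_lift Hc2) => u Hu.
    exists u; apply: (confl_mono Hp).
    by rewrite compA Hm.
  - move=> T a b Eab; apply: (confl_mono Hc2).
    by rewrite -Hm -!compA Eab.
have [gt Hgt] : exists gt, m ° gt = g' ° w.
  by apply: (confl_lift Hmpi); rewrite compA Epi (confl_comp0 Hw).
have [x Hx] : exists x, w ° x = i1.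
  apply: (confl_lift Hw); apply: (confl_mono Hjn).
  by rewrite compm0 compA -Ee -compA E compA (confl_comp0 Hc2) comp0m.
have Egx : gt ° x = d2.
  apply: (confl_mono Hc2).
  by rewrite -E -Hx -Hg' -Hm -!compA (eqr _ Hgt) -compA.
have Hwx : confl (w ° x) c1 by rewrite Hx.
have [L [l [Hxl HL]]] := infl_cancel Hw Hwx HQ1.
pose ga := bp_i1 M L ° gt + bp_i2 M L ° l.
have Hga : A_deflation confl Aset ga.
  apply: (Eprime (w := x) (e := l) (m := bp_i1 M L) (pi := bp_p2 M L) (gt := d2) (psi := k2)
    Hxl (conflS1 M L) _ _ Hk2 HK2).
  - by rewrite /ga; cnorm; rewrite Egx (confl_comp0 Hxl); cnorm.
  - by rewrite /ga; cnorm.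
have Hgtd : A_deflation confl Aset gt.
  have -> : gt = bp_p1 M L ° ga by rewrite /ga; cnorm.
  apply: (Adefl_comp Hga).
  by exists L, (bp_i2 M L); split; [exact: conflS2 | exact: HL].
have [Nn [psi [Hpsi HN]]] := Hgtd.
have Hg'd := Eprime Hw Hmpi (esym Hgt) Epi Hpsi HN.
rewrite -Hg'; apply: S_A_comp; first exact: S_A_defl.
by apply: S_A_infl; exists Tn, (n ° c2).
Qed.

Lemma two_of_three_a (X Y Z : obj C) (f : hom C X Y) (g : hom C Y Z) :
  S_A confl Aset f -> S_A confl Aset (g ° f) -> S_A confl Aset g.
Proof.
move=> Hf; move: Z g; elim: Hf => {X Y f}.
- by move=> X Y f Hf Z g; apply: cancel_ai.
- by move=> X Y f Hf Z g; apply: cancel_ad.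
- move=> X Y Y' f f' _ IH1 _ IH2 Z g H.
  by apply: IH2; apply: IH1; rewrite -compA.
Qed.

Lemma two_of_three_b (X Y Z : obj C) (f : hom C X Y) (g : hom C Y Z) :
  S_A confl Aset g -> S_A confl Aset (g ° f) -> S_A confl Aset f.
Proof.
move=> Hg; move: X f; elim: Hg => {Y Z g}.
- by move=> Y Z g Hg X f; apply: cancel_bi.
- by move=> Y Z g Hg X f; apply: cancel_bd.
- move=> Y Y' Z g g' _ IH1 _ IH2 X f H.
  by apply: IH1; apply: IH2; rewrite compA.
Qed.

End Confl.

Theorem mainTheorem2 (C : AddCat) (confl : confl_class C)
  (HC : deflation_exact confl) (Aset : obj C -> Prop)
  (HA : adm_deflation_percolating confl Aset)
  (X Y Z : obj C) (f : hom C X Y) (g : hom C Y Z) :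
  (S_A confl Aset f -> S_A confl Aset g -> S_A confl Aset (cmp g f)) /\
  (S_A confl Aset f -> S_A confl Aset (cmp g f) -> S_A confl Aset g) /\
  (S_A confl Aset g -> S_A confl Aset (cmp g f) -> S_A confl Aset f).
Proof.
split; first by move=> Hf Hg; apply: S_A_comp.
split; first exact: (two_of_three_a HC HA).
exact: (two_of_three_b HC HA).
Qed.
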